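(* Let $K$ be a number field, let $\alpha,\beta$ be multiplicatively independent positive rational numbers, and let $N$ be a natural number. Let $F\in K[[x^{\mathbb{R}}]]$ be a Hahn series satisfying nontrivial homogeneous equations $\sum_{i=0}^{d_1}P_i(x)F(x^{\alpha^i})=0$ and $\sum_{i=0}^{d_2}Q_i(x)F(x^{\beta^i})=0$ with $P_i,Q_i\in K[x]$, $P_{d_1}\ne0$, $Q_{d_2}\ne0$. Then there is a positive integer $l$ such that $G(x)=F(x^l)$ satisfies $$P(G)\subseteq\bigcap_{|n|,|m|\le N}\mathbb{Z}\big[\alpha^n\beta^m,(\alpha^n\beta^m)^{-1}\big],$$ the intersection being over all integers $n,m$ with $|n|\le N$, $|m|\le N$.
   Context: $K[[x^{\mathbb{R}}]]$ is the field of Hahn series $\sum_{i\in\mathbb{R}} f_ix^i$ ($f_i\in K$) with well-ordered support $P(F)=\{i:f_i\ne0\}$; $F(x^\gamma)=\sum_if_ix^{\gamma i}$. For a positive rational $\gamma$, $\mathbb{Z}[\gamma,\gamma^{-1}]$ is the subring of $\mathbb{Q}$ generated by $\gamma$ and $\gamma^{-1}$. Positive reals $\alpha,\beta$ are multiplicatively independent if $\log\alpha/\log\beta\notin\mathbb{Q}$. *)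

(* Defs.v *)
From HB Require Import structures.
From mathcomp Require Import all_boot all_order all_algebra all_field.
From mathcomp Require Import all_classical all_reals all_analysis.
Set Implicit Arguments. Unset Strict Implicit. Unset Printing Implicit Defensive.
Import Order.TTheory GRing.Theory Num.Theory.
Local Open Scope ring_scope.
Local Open Scope classical_set_scope.

(* A Hahn series in K[[x^R]] is represented by its coefficient function
   f : R -> K (f i = coefficient of x^i) together with the condition that
   its support is well-ordered. *)
Definition hahn_support (R : realType) (K : fieldType) (f : R -> K) : set R :=
  [set i | f i != 0].

Definition well_ordered_set (R : realType) (S : set R) : Prop :=
  forall A : set R, A `<=` S -> A !=set0 ->
    exists2 a, A a & forall b, A b -> a <= b.

Definition is_hahn (R : realType) (K : fieldType) (f : R -> K) : Prop :=
  well_ordered_set (hahn_support f).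

(* F(x^g) = sum_i f_i x^(g i): its coefficient at j is f (j / g) (g > 0). *)
Definition hahn_subst (R : realType) (K : fieldType) (f : R -> K) (g : R) : R -> K :=
  fun j => f (j / g).

Definition hahn_polymul (R : realType) (K : fieldType) (p : {poly K}) (f : R -> K) : R -> K :=
  fun j => \sum_(k < size p) p`_k * f (j - k%:R).

Definition mahler_eq (R : realType) (K : fieldType) (P : nat -> {poly K}) (d : nat)
  (g : R) (f : R -> K) : Prop :=
  forall j : R, \sum_(i < d.+1) hahn_polymul (P i) (hahn_subst f (g ^+ i)) j = 0.

Definition mult_indep (R : realType) (a b : R) : Prop :=
  ~ exists q : rat, ln a / ln b = ratr q.

(* q belongs to Z[g, g^-1], the subring of Q generated by g and g^-1
   (integer Laurent polynomials in g). *)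
Definition in_Zlaurent (g q : rat) : Prop :=
  exists s : seq (int * int), q = \sum_(p <- s) (p.1)%:~R * g ^ p.2.

(* Main.v *)
Require Import Defs.
From HB Require Import structures.
From mathcomp Require Import all_boot all_order all_algebra all_field.
From mathcomp Require Import all_classical all_reals all_analysis.
From mathcomp Require Import ring zify.
Import Order.TTheory GRing.Theory Num.Theory.
Set Implicit Arguments. Unset Strict Implicit. Unset Printing Implicit Defensive.
Local Open Scope ring_scope.

Section Act.
Variables (R : realType) (K : fieldType).

Definition hp (p : {poly K}) (h : R) (f : R -> K) (j : R) : K :=
  \sum_(k < size p) p`_k * f (j - k%:R * h).

Lemma hp_widen n (p : {poly K}) (h : R) (f : R -> K) (j : R) : (size p <= n)%N ->
  hp p h f j = \sum_(k < n) p`_k * f (j - k%:R * h).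
Proof.
move=> le; rewrite /hp (big_ord_widen n (fun k => p`_k * f (j - k%:R * h))) //.
rewrite big_mkcond; apply: eq_bigr => i _; case: ltnP => // H.
by rewrite nth_default // mul0r.
Qed.

Lemma hp_ext (p : {poly K}) (h : R) (f g : R -> K) (j : R) : (forall x, f x = g x) -> hp p h f j = hp p h g j.
Proof. by move=> e; apply: eq_bigr => i _; rewrite e. Qed.

Lemma hp0 (h : R) (f : R -> K) (j : R) : hp 0 h f j = 0.
Proof. by rewrite /hp size_poly0 big_ord0. Qed.

Lemma hpD (p q : {poly K}) (h : R) (f : R -> K) (j : R) : hp (p + q) h f j = hp p h f j + hp q h f j.
Proof.
rewrite !(@hp_widen (maxn (size p) (size q))) ?leq_maxl ?leq_maxr ?size_polyD //.
by rewrite -big_split; apply: eq_bigr => i _; rewrite coefD mulrDl.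
Qed.

Lemma hpCM (c : K) (p : {poly K}) (h : R) (f : R -> K) (j : R) : hp (c%:P * p) h f j = c * hp p h f j.
Proof.
rewrite !(@hp_widen (size p)) //; last by rewrite mul_polyC size_scale_leq.
by rewrite mulr_sumr; apply: eq_bigr => i _; rewrite coefCM mulrA.
Qed.

Lemma hpC (c : K) (h : R) (f : R -> K) (j : R) : hp c%:P h f j = c * f j.
Proof.
rewrite (@hp_widen 1) ?size_polyC ?leq_b1 // big_ord1 coefC /=.
by rewrite mul0r subr0.
Qed.

Lemma hpMX (p : {poly K}) (h : R) (f : R -> K) (j : R) : hp (p * 'X) h f j = hp p h f (j - h).
Proof.
rewrite (@hp_widen (size p).+1); last first.
  by have [->|nz] := eqVneq p 0; rewrite ?mul0r ?size_poly0 // size_mulX.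
rewrite big_ord_recl coefMX /= mul0r add0r /hp.
apply: eq_bigr => i _.
rewrite coefMX /bump leq0n /= add1n; congr (_ * f _).
by rewrite -addn1 natrD mulrDl mul1r opprD addrA addrAC.
Qed.

Lemma hpMXn n (p : {poly K}) (h : R) (f : R -> K) (j : R) : hp (p * 'X^n) h f j = hp p h f (j - n%:R * h).
Proof.
elim: n j => [|n IH] j; first by rewrite expr0 mulr1 mul0r subr0.
rewrite exprSr mulrA hpMX IH; congr (hp p h f _).
by rewrite -addn1 natrD mulrDl mul1r opprD addrA addrAC.
Qed.

Lemma hp_add (p : {poly K}) (h : R) (f g : R -> K) (j : R) :
  hp p h (fun x => f x + g x) j = hp p h f j + hp p h g j.
Proof. by rewrite /hp -big_split; apply: eq_bigr => i _; rewrite mulrDr. Qed.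

Lemma hp_scale (p : {poly K}) (h : R) (a : K) (f : R -> K) (j : R) :
  hp p h (fun x => a * f x) j = a * hp p h f j.
Proof. by rewrite /hp mulr_sumr; apply: eq_bigr => i _; rewrite mulrCA. Qed.

Lemma hp_zero (p : {poly K}) (h : R) (j : R) : hp p h (fun _ => 0) j = 0.
Proof. by rewrite /hp big1 // => i _; rewrite mulr0. Qed.

Lemma hp_sum (I : finType) (p : {poly K}) (h : R) (F : I -> R -> K) (j : R) :
  hp p h (fun x => \sum_i F i x) j = \sum_i hp p h (F i) j.
Proof.
rewrite /hp exchange_big; apply: eq_bigr => i _; rewrite mulr_sumr //.
Qed.

Lemma hpM (p q : {poly K}) (h : R) (f : R -> K) (j : R) : hp (p * q) h f j = hp p h (hp q h f) j.
Proof.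
elim/poly_ind: p j => [|p c IH] j; first by rewrite mul0r !hp0.
rewrite mulrDl mulrAC hpD hpMX IH hpCM hpD hpMX hpC //.
Qed.

Lemma hp_comm (p q : {poly K}) (h : R) (f : R -> K) (j : R) : hp p h (hp q h f) j = hp q h (hp p h f) j.
Proof. by rewrite -!hpM mulrC. Qed.

Lemma hp_comp N (p : {poly K}) (h : R) (f : R -> K) (j : R) : (0 < N)%N ->
  hp (p \Po 'X^N) h f j = hp p (N%:R * h) f j.
Proof.
move=> N0; elim/poly_ind: p j => [|p c IH] j; first by rewrite comp_poly0 !hp0.
rewrite comp_poly_MXaddC hpD hpMXn IH hpC hpD hpMX hpC //.
Qed.

Lemma hp1 (h : R) (f : R -> K) (j : R) : hp 1 h f j = f j.
Proof. by rewrite hpC mul1r. Qed.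

End Act.

Section Span.
Variables (R : realType) (K : fieldType) (h : R) (I : finType) (b : I -> R -> K).

Definition InSpan (w : R -> K) : Prop :=
  exists d : {poly K}, d != 0 /\ exists C : I -> {poly K},
    forall j, hp d h w j = \sum_i hp (C i) h (b i) j.

Lemma hp_sumP (J : Type) (r : seq J) (P : J -> {poly K}) (f : R -> K) j :
  hp (\sum_(k <- r) P k) h f j = \sum_(k <- r) hp (P k) h f j.
Proof.
apply: (big_morph (fun p => hp p h f j)) => [p q|]; [exact: hpD | exact: hp0].
Qed.

Lemma inspan_ext w w' : (forall x, w x = w' x) -> InSpan w -> InSpan w'.
Proof.
move=> e [d [dn [C HC]]]; exists d; split => //; exists C => j.
by rewrite -HC; apply: hp_ext => x; rewrite e.
Qed.

Lemma inspan_b i : InSpan (b i).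
Proof.
exists 1; split; first exact: oner_neq0.
exists (fun i' => if i' == i then 1 else 0) => j.
rewrite (bigD1 i) //= eqxx big1 ?addr0 ?hp1 // => i' /negPf ->.
by rewrite hp0.
Qed.

Lemma inspan_add w1 w2 : InSpan w1 -> InSpan w2 -> InSpan (fun x => w1 x + w2 x).
Proof.
move=> [d1 [d1n [C1 H1]]] [d2 [d2n [C2 H2]]].
exists (d1 * d2); split; first by rewrite mulf_neq0.
exists (fun i => d2 * C1 i + d1 * C2 i) => j.
rewrite hp_add {1}mulrC !hpM (hp_ext _ _ _ H2) (hp_ext _ _ _ H1).
rewrite !hp_sum -big_split; apply: eq_bigr => i _.
by rewrite hpD !hpM.
Qed.

Lemma inspan_hp c w : InSpan w -> InSpan (hp c h w).
Proof.
move=> [d [dn [C HC]]]; exists d; split => //.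
exists (fun i => c * C i) => j.
rewrite hp_comm (hp_ext _ _ _ HC) hp_sum; apply: eq_bigr => i _.
by rewrite hpM.
Qed.

Lemma inspan_div c w : c != 0 -> InSpan (hp c h w) -> InSpan w.
Proof.
move=> cn [d [dn [C HC]]]; exists (d * c); split; first by rewrite mulf_neq0.
by exists C => j; rewrite hpM HC.
Qed.

Lemma inspan_zero : InSpan (fun _ => 0).
Proof.
exists 1; split; first exact: oner_neq0.
by exists (fun _ => 0) => j; rewrite hp1 big1 // => i _; rewrite hp0.
Qed.

Lemma inspan_sumseq (J : Type) (r : seq J) (W : J -> R -> K) :
  (forall k, InSpan (W k)) -> InSpan (fun x => \sum_(k <- r) W k x).
Proof.
move=> HW; elim: r => [|k r IH].
  by apply: inspan_ext inspan_zero => x; rewrite big_nil.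
apply: inspan_ext (inspan_add (HW k) IH) => x; by rewrite big_cons.
Qed.

Lemma inspan_dep (n : nat) (v : 'I_n -> R -> K) : (#|I| < n)%N ->
  (forall k, InSpan (v k)) ->
  exists c : 'I_n -> {poly K}, (exists k, c k != 0) /\
    forall j, \sum_k hp (c k) h (v k) j = 0.
Proof.
move=> ltn Hv.
have [dC HdC] := choice Hv.
have [C HC] := choice (fun k => proj2 (HdC k)).
pose M : 'M[{poly K}]_n := \matrix_(k, l)
  oapp (fun l' : 'I_#|I| => C k (enum_val l')) 0 (insub (val l)).
have detM : \det M == 0.
  apply/eqP; rewrite (expand_det_col _ (Ordinal ltn)) big1 // => k _.
  by rewrite mxE insubF ?ltnn // mul0r.
have [u un uM] := det0P detM.
exists (fun k => u 0 k * dC k); split.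
  case: (pickP (fun k => u 0 k != 0)) => [k Hk|H].
    by exists k; rewrite mulf_neq0 // (HdC k).1.
  exfalso; move/negP: un; apply; apply/eqP/rowP => k; rewrite mxE.
  by move: (H k) => /= /negbFE/eqP.
move=> j.
under eq_bigr => k _ do rewrite hpM (hp_ext _ _ _ (HC k)) hp_sum.
rewrite exchange_big /= big1 // => i _.
under eq_bigr => k _ do rewrite -hpM.
rewrite -hp_sumP.
have -> : \sum_(k < n) u 0 k * C k i = 0.
  have := congr1 (fun A : 'M[{poly K}]_(1,n) => A 0 (widen_ord (ltnW ltn) (enum_rank i))) uM.
  rewrite /= !mxE => H0; rewrite -[RHS]H0; apply: eq_bigr => k _.
  by rewrite mxE /= (valK (enum_rank i)) /= enum_rankK.
exact: hp0.
Qed.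

End Span.

Section Reduce.
Variables (R : realType) (K : fieldType) (h : R).

Lemma inspan_opp (I : finType) (b : I -> R -> K) w :
  InSpan h b w -> InSpan h b (fun x => - w x).
Proof.
move=> Hw; apply: inspan_ext (inspan_hp (-1)%:P Hw) => x.
by rewrite hpC mulN1r.
Qed.

Lemma hahn_polymul_hp (p : {poly K}) (f : R -> K) j :
  hahn_polymul p f j = hp p 1 f j.
Proof. by apply: eq_bigr => k _; rewrite mulr1. Qed.

Lemma eq_subst (P : nat -> {poly K}) d (c : R) (F : R -> K) (g : R) (N : nat)
    (u : nat -> R -> K) :
  mahler_eq P d c F -> (0 < N)%N -> g = N%:R * h -> g != 0 ->
  (forall i x, u i x = F (x / (g * c ^+ i))) ->
  forall j, \sum_(i < d.+1) hp (P i \Po 'X^N) h (u i) j = 0.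
Proof.
move=> HM N0 gE g0 Hu j.
rewrite -[RHS](HM (j / g)); apply: eq_bigr => i _.
rewrite hp_comp // -gE hahn_polymul_hp; apply: eq_bigr => k _.
rewrite Hu /hahn_subst; congr (_ * F _).
rewrite mulr1 invfM mulrA; congr (_ * _).
by rewrite mulrBl mulfK.
Qed.

End Reduce.

Section Reduce2.
Variables (R : realType) (K : fieldType) (h : R).

Definition V (al be : R) (F : R -> K) (a b : nat) : R -> K :=
  fun x => F (x / (al ^+ a * be ^+ b)).

Lemma reduce (P Q : nat -> {poly K}) d1 d2 (al be : R) (F : R -> K) (A B : nat) :
  0 < al -> 0 < be -> P d1 != 0 -> Q d2 != 0 ->
  mahler_eq P d1 al F -> mahler_eq Q d2 be F ->
  (forall a b, (a <= A)%N -> (b <= B)%N ->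
     exists N : nat, al ^+ a * be ^+ b = N%:R * h) ->
  forall a b, (a <= A)%N -> (b <= B)%N ->
  InSpan h (fun ab : 'I_d1 * 'I_d2 => V al be F ab.1 ab.2) (V al be F a b).
Proof.
move=> al0 be0 HP HQ EP EQ Hlat a b.
have [n Hn] := ubnP (a + b); elim: n a b Hn => // n IH a b Hab aA bB.
have gpos : forall a b, 0 < al ^+ a * be ^+ b.
  by move=> a' b'; rewrite mulr_gt0 // exprn_gt0.
have Npos : forall a b N, al ^+ a * be ^+ b = N%:R * h -> (0 < N)%N.
  move=> a' b' N E; case: N E => // E.
  by move: (gpos a' b'); rewrite E mul0r ltxx.
case: (leqP d1 a) => Ha.
  have a0A : (a - d1 <= A)%N by apply: leq_trans (leq_subr _ _) aA.
  have [N gE] := Hlat _ _ a0A bB.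
  have N0 := Npos _ _ _ gE.
  have E := @eq_subst R K h P d1 al F _ N (fun i => V al be F (a - d1 + i) b)
    EP N0 gE (lt0r_neq0 (gpos _ _)).
  have {}E : forall j, \sum_(i < d1.+1) hp (P i \Po 'X^N) h (V al be F (a - d1 + i) b) j = 0.
    apply: E => i x; rewrite /V exprD; congr (F (_ / _)); rewrite mulrAC //.
  apply: (@inspan_div _ _ _ _ _ (P d1 \Po 'X^N)).
    by rewrite comp_poly_eq0 ?size_polyXn ?ltnS //.
  apply: (@inspan_ext _ _ _ _ _ (fun x => - \sum_(i < d1) hp (P i \Po 'X^N) h (V al be F (a - d1 + i) b) x)).
    move=> x; move/eqP: (E x); rewrite big_ord_recr /= subnK // addrC addr_eq0 => /eqP ->.
    by [].
  apply: inspan_opp; apply: inspan_sumseq => i; apply: inspan_hp; apply: IH.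
  - have := ltn_ord i; lia.
  - have := ltn_ord i; lia.
  - exact: bB.
case: (leqP d2 b) => Hb.
  have b0B : (b - d2 <= B)%N by apply: leq_trans (leq_subr _ _) bB.
  have [N gE] := Hlat _ _ aA b0B.
  have N0 := Npos _ _ _ gE.
  have E := @eq_subst R K h Q d2 be F _ N (fun i => V al be F a (b - d2 + i))
    EQ N0 gE (lt0r_neq0 (gpos _ _)).
  have {}E : forall j, \sum_(i < d2.+1) hp (Q i \Po 'X^N) h (V al be F a (b - d2 + i)) j = 0.
    apply: E => i x; rewrite /V exprD; congr (F (_ / _)); rewrite mulrA //.
  apply: (@inspan_div _ _ _ _ _ (Q d2 \Po 'X^N)).
    by rewrite comp_poly_eq0 ?size_polyXn ?ltnS //.
  apply: (@inspan_ext _ _ _ _ _ (fun x => - \sum_(i < d2) hp (Q i \Po 'X^N) h (V al be F a (b - d2 + i)) x)).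
    move=> x; move/eqP: (E x); rewrite big_ord_recr /= subnK // addrC addr_eq0 => /eqP ->.
    by [].
  apply: inspan_opp; apply: inspan_sumseq => i; apply: inspan_hp; apply: IH.
  - have := ltn_ord i; lia.
  - exact: aA.
  - have := ltn_ord i; lia.
apply: (@inspan_ext _ _ _ _ _ (V al be F (Ordinal Ha, Ordinal Hb).1 (Ordinal Ha, Ordinal Hb).2)) => //.
exact: (@inspan_b R K h _ (fun ab : 'I_d1 * 'I_d2 => V al be F ab.1 ab.2) (Ordinal Ha, Ordinal Hb)).
Qed.

End Reduce2.

Section RatY.

Lemma absden (g : rat) : (`|denq g|%N)%:R = (denq g)%:~R :> rat.
Proof. by rewrite -[in RHS]absz_denq. Qed.

Lemma absnum (g : rat) : 0 < g -> (`|numq g|%N)%:R = (numq g)%:~R :> rat.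
Proof.
move=> g0; have H : 0 <= numq g by rewrite numq_ge0 ltW.
by rewrite -[in RHS](gez0_abs H).
Qed.

Definition hof (g : rat) : nat := (`|numq g| * `|denq g|)%N.

Definition YE (E : nat) (g : rat) (y : rat) : Prop :=
  exists e : nat, ((E * hof g ^ e)%N)%:R * y \is a Num.int.

Lemma hof_mul (g : rat) : 0 < g -> (hof g)%:R * g \is a Num.int.
Proof.
move=> g0; rewrite /hof natrM -mulrA.
have -> : (`|denq g|%N)%:R * g = (numq g)%:~R :> rat.
  by rewrite numqE mulrC absden.
by rewrite rpredM ?rpred_int ?rpred_nat.
Qed.

Lemma hof_mulV (g : rat) : 0 < g -> (hof g)%:R * g^-1 \is a Num.int.
Proof.
move=> g0; have n0 : 0 < numq g by rewrite numq_gt0.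
rewrite /hof natrM mulrAC.
have -> : (`|numq g|%N)%:R * g^-1 = (denq g)%:~R :> rat.
  rewrite absnum // numqE mulrAC divff ?mul1r //.
  by rewrite gt_eqF.
by rewrite rpredM ?rpred_int ?rpred_nat.
Qed.

Lemma YE_add E g y1 y2 : YE E g y1 -> YE E g y2 -> YE E g (y1 + y2).
Proof.
move=> [e1 H1] [e2 H2]; exists (e1 + e2)%N.
rewrite mulrDr; apply: rpredD.
  by rewrite expnD mulnA natrM mulrAC rpredM // rpred_nat.
by rewrite expnD mulnCA mulnC natrM mulrAC rpredM // rpred_nat.
Qed.

Lemma YE_opp E g y : YE E g y -> YE E g (- y).
Proof. by move=> [e H]; exists e; rewrite mulrN rpredN. Qed.

Lemma YE_mul E g y : 0 < g -> YE E g y -> YE E g (g * y).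
Proof.
move=> g0 [e H]; exists e.+1.
by rewrite expnSr mulnA natrM [g * y]mulrC mulrACA rpredM // hof_mul.
Qed.

Lemma YE_mulV E g y : 0 < g -> YE E g y -> YE E g (g^-1 * y).
Proof.
move=> g0 [e H]; exists e.+1.
by rewrite expnSr mulnA natrM [g^-1 * y]mulrC mulrACA rpredM // hof_mulV.
Qed.

Lemma YE_mulz E g y (z : int) : 0 < g -> YE E g y -> YE E g (g ^ z * y).
Proof.
move=> g0 Hy; case: z => n.
  elim: n => [|n IH]; first by rewrite expr0z mul1r.
  by rewrite exprSz -mulrA; apply: YE_mul.
have -> : g ^ (Negz n) = g^-1 ^+ n.+1 by rewrite exprVn.
elim: n.+1 => [|m IH]; first by rewrite expr0 mul1r.
by rewrite exprS -mulrA; apply: YE_mulV.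
Qed.

Lemma YE_dvd E E' g y : (E %| E')%N -> YE E g y -> YE E' g y.
Proof.
move=> /dvdnP [c ->] [e H]; exists e.
by rewrite -mulnA natrM -mulrA rpredM // rpred_nat.
Qed.

Lemma YE_int E g y : (E%:R * y) \is a Num.int -> YE E g y.
Proof. by move=> H; exists 0%N; rewrite expn0 muln1. Qed.

End RatY.

Section RatHelp.

Lemma numq_div_int (d : rat) : d != 0 -> (numq d)%:~R / d \is a Num.int.
Proof.
move=> d0; rewrite numqE mulrAC divff // mul1r; exact: rpred_int.
Qed.

Lemma base_int (B : rat) (D : nat) (m : int) : 0 < B -> (0 < D)%N ->
  ((D * `|numq B|)%N)%:R * (m%:~R / (D%:R * B)) \is a Num.int.
Proof.
move=> B0 D0; rewrite natrM absnum // invfM.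
have Dn : (D%:R : rat) != 0 by rewrite pnatr_eq0 -lt0n.
have -> : D%:R * (numq B)%:~R * (m%:~R * (D%:R^-1 * B^-1)) =
  m%:~R * ((numq B)%:~R / B) :> rat.
  by field; rewrite Dn lt0r_neq0.
apply: rpredM; first exact: rpred_int.
exact: numq_div_int (lt0r_neq0 B0).
Qed.

Lemma absz_int (N : int) (x : rat) : N%:~R * x \is a Num.int ->
  (`|N|%N)%:R * x \is a Num.int.
Proof.
move=> H; rewrite natr_absz normrEsign intrM -mulrA.
by apply: rpredM => //; exact: rpred_int.
Qed.

End RatHelp.

Section ClassRel.
Variables (R : realType).

Definition crel (E0 : nat) (g : rat) (s t : R) : Prop :=
  exists z : int, exists y : rat, YE E0 g y /\ s = ratr (g ^ z) * t + ratr y.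

Lemma YE0 E g : YE E g 0.
Proof. by apply: YE_int; rewrite mulr0 rpred0. Qed.

Lemma crel_refl E g s : crel E g s s.
Proof.
exists 0, 0; split; first exact: YE0.
by rewrite expr0z rmorph1 rmorph0 mul1r addr0.
Qed.

Lemma crel_sym E g s t : 0 < g -> crel E g s t -> crel E g t s.
Proof.
move=> g0 [z [y [Hy ->]]]; exists (- z), (- (g ^ (- z) * y)); split.
  by apply: YE_opp; apply: YE_mulz.
have gz : g ^ z != 0 by apply: expfz_neq0; rewrite lt0r_neq0.
have gzz : g ^ (- z) * g ^ z = 1 by rewrite -invr_expz mulVf.
rewrite mulrDr mulrA -rmorphM gzz rmorph1 mul1r.
by rewrite rmorphN rmorphM addrK.
Qed.

Lemma crel_trans E g s t u : 0 < g -> crel E g s t -> crel E g t u -> crel E g s u.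
Proof.
move=> g0 [z1 [y1 [H1 ->]]] [z2 [y2 [H2 ->]]].
exists (z1 + z2), (g ^ z1 * y2 + y1); split.
  by apply: YE_add => //; apply: YE_mulz.
rewrite expfzDr ?lt0r_neq0 // rmorphD rmorphM rmorphM.
by rewrite mulrDr mulrA addrA.
Qed.

Lemma YE_mulVn E g y n : 0 < g -> YE E g y -> YE E g ((g ^+ n)^-1 * y).
Proof.
move=> g0 Hy; rewrite -exprVn; elim: n => [|n IH]; first by rewrite expr0 mul1r.
by rewrite exprS -mulrA; apply: YE_mulV.
Qed.

Lemma crel_pts (g B : rat) (D : nat) (j : R) (k1 k2 e1 e2 : nat) :
  0 < g -> 0 < B -> (0 < D)%N ->
  crel (D * `|numq B|)%N g ((j - e1%:R * D%:R^-1) / ratr (B * g ^+ k1))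
                             ((j - e2%:R * D%:R^-1) / ratr (B * g ^+ k2)).
Proof.
move=> g0 B0 D0.
pose m : int := (e2%:Z - e1%:Z).
exists (k2%:Z - k1%:Z), ((g ^+ k1)^-1 * (m%:~R / (D%:R * B))); split.
  by apply: YE_mulVn => //; apply: YE_int; apply: base_int.
have gk : forall k, g ^+ k != 0 by move=> k; rewrite expf_neq0 // lt0r_neq0.
have H1 : ratr (g ^ (k2%:Z - k1%:Z)) / ratr (B * g ^+ k2) = (ratr (B * g ^+ k1))^-1 :> R.
  have Q1 : g ^ (k2%:Z - k1%:Z) / (B * g ^+ k2) = (B * g ^+ k1)^-1.
    rewrite expfzDr ?lt0r_neq0 // -invr_expz.
    have -> : g ^ k2%:Z = g ^+ k2 by [].
    have -> : g ^ k1%:Z = g ^+ k1 by [].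
    by field; rewrite !gk lt0r_neq0.
  by rewrite -fmorphV -rmorphM Q1 fmorphV.
have Dn : (D%:R : rat) != 0 by rewrite pnatr_eq0 -lt0n.
have Q2 : (g ^+ k1)^-1 * (m%:~R / (D%:R * B)) =
    (e2%:R - e1%:R) / D%:R / (B * g ^+ k1).
  by rewrite /m intrB; field; rewrite Dn gk lt0r_neq0.
have H2 : ratr ((g ^+ k1)^-1 * (m%:~R / (D%:R * B))) =
    (e2%:R - e1%:R) * D%:R^-1 / ratr (B * g ^+ k1) :> R.
  by rewrite Q2 !rmorphM !fmorphV !rmorphM rmorphB !rmorph_nat.
rewrite H2 mulrCA H1; ring.
Qed.

End ClassRel.

Section ClassLemma.
Variables (R : realType) (K : fieldType).

Lemma class_key (F : R -> K) (g B : rat) (D n : nat) (c : 'I_n -> {poly K})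
    (s0 : R) :
  0 < g -> g != 1 -> 0 < B -> (0 < D)%N ->
  (forall j, \sum_(k < n) hp (c k) (D%:R^-1) (fun x => F (x / ratr (B * g ^+ k))) j = 0) ->
  (exists k, c k != 0) ->
  F s0 != 0 ->
  (forall t, F t != 0 -> crel (D * `|numq B|)%N g t s0 -> s0 <= t) ->
  exists p1 p2 : 'I_n, p1 != p2 /\ exists e1 e2 : nat,
    s0 * (ratr (B * g ^+ p1) - ratr (B * g ^+ p2)) = (e2%:R - e1%:R) * D%:R^-1.
Proof.
move=> g0 g1 B0 D0 Heq [k0 ck0] Fs0 Hmin0.
set h : R := D%:R^-1.
pose G k : R := ratr (B * g ^+ k).
have Gpos : forall k, 0 < G k.
  by move=> k; rewrite /G ltr0q mulr_gt0 // exprn_gt0.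
pose M := (\max_(k < n) size (c k))%N.+1.
have Heq' : forall j, \sum_(p : 'I_n * 'I_M) (c p.1)`_p.2 * F ((j - p.2%:R * h) / G p.1) = 0.
  move=> j; rewrite -[RHS](Heq j) -(pair_big xpredT xpredT (fun k (e : 'I_M) => (c k)`_e * F ((j - e%:R * h) / G k))) /=.
  apply: eq_bigr => k _; rewrite (@hp_widen _ _ M) //.
  by apply: ltnW; rewrite ltnS; exact: (leq_bigmax (F := fun k => size (c k)) k).
pose phi (p : 'I_n * 'I_M) : R := G p.1 * s0 + p.2%:R * h.
pose Pnz (p : 'I_n * 'I_M) := (c p.1)`_p.2 != 0.
have p0lt : ((size (c k0)).-1 < M)%N.
  rewrite /M ltnS; apply: leq_trans (leq_pred _) _.
  exact: (leq_bigmax (F := fun k => size (c k)) k0).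
have Pp0 : Pnz (k0, Ordinal p0lt) by rewrite /Pnz /= -lead_coefE lead_coef_eq0.
case: (arg_minP phi Pp0) => pm Ppm Hmin.
set jst := phi pm.
have hn0 : h != 0 by rewrite /h invr_eq0 pnatr_eq0 -lt0n.
have tphi : forall p, (phi p - p.2%:R * h) / G p.1 = s0.
  by move=> p; rewrite /phi addrK mulrC mulKf // lt0r_neq0.
have Hterm : forall p : 'I_n * 'I_M, (c p.1)`_p.2 * F ((jst - p.2%:R * h) / G p.1) =
    if Pnz p && (phi p == jst) then (c p.1)`_p.2 * F s0 else 0.
  move=> p; rewrite /Pnz; case: (eqVneq ((c p.1)`_p.2) 0) => [Hc0|Hc0] /=.
    by rewrite Hc0 mul0r.
  case: (eqVneq (phi p) jst) => [Hph|Hph] /=; first by rewrite -Hph tphi.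
  case: (eqVneq (F ((jst - p.2%:R * h) / G p.1)) 0) => [->|Ft]; first by rewrite mulr0.
  exfalso; move/eqP: Hph; apply.
  have Hc : crel (D * `|numq B|)%N g ((jst - p.2%:R * h) / G p.1) s0.
    rewrite -[in X in crel _ _ _ X](tphi pm).
    exact: crel_pts.
  have le1 := Hmin0 _ Ft Hc.
  have le2 := Hmin p Hc0.
  apply/eqP; rewrite eq_le le2 andbT /phi.
  have -> : jst = G p.1 * ((jst - p.2%:R * h) / G p.1) + p.2%:R * h.
    by rewrite mulrC divfK ?lt0r_neq0 // subrK.
  by rewrite lerD2r ler_pM2l.
have := Heq' jst.
rewrite (eq_bigr _ (fun p _ => Hterm p)) -big_mkcond /= -mulr_suml => /eqP.
rewrite mulf_eq0 (negbTE Fs0) orbF => /eqP Hsum.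
case: (pickP (fun p => Pnz p && (phi p == jst) && (p.1 != pm.1))) => [p Hp | Hnone].
  move: Hp => /andP [/andP [_ /eqP Hph] Hne].
  exists p.1, pm.1; split => //; exists p.2, pm.2.
  move: Hph; rewrite /jst /phi /G => /eqP; rewrite -subr_eq0 => /eqP E.
  apply/eqP; rewrite -subr_eq0; apply/eqP; rewrite -[RHS]E; ring.
exfalso; move: Hsum; rewrite (bigD1 pm) /=; last by rewrite Ppm eqxx.
rewrite big1 ?addr0; first by apply/eqP.
move=> p /andP [/andP [Pp /eqP Hph] Hne].
move: (Hnone p); rewrite /= Pp Hph eqxx /= => /negbFE/eqP H1.
exfalso; move/negP: Hne; apply; apply/eqP.
move: Hph; rewrite /jst /phi H1 => /addrI /(mulIf hn0) /eqP.
rewrite eqr_nat => /eqP H2.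
rewrite [p]surjective_pairing [pm]surjective_pairing H1; congr pair.
exact: val_inj.
Qed.

End ClassLemma.

Lemma Rint_int (z : int) : (z%:~R : rat) \is a Num.int.
Proof. exact: rpred_int. Qed.

Section ClassLemma2.
Variables (R : realType) (K : fieldType).

Lemma class_lemma (F : R -> K) (g B : rat) (D n : nat) (c : 'I_n -> {poly K}) :
  is_hahn F -> 0 < g -> g != 1 -> 0 < B -> (0 < D)%N ->
  (exists k, c k != 0) ->
  (forall j, \sum_(k < n) hp (c k) (D%:R^-1) (fun x => F (x / ratr (B * g ^+ k))) j = 0) ->
  exists E : nat, (0 < E)%N /\
    forall s, F s != 0 -> exists r : rat, s = ratr r /\ YE E g r.
Proof.
move=> Hh g0 g1 B0 D0 Hc Heq.
set E0 := (D * `|numq B|)%N.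
pose Np : int := \prod_(p : 'I_n * 'I_n | p.1 != p.2) numq (g ^+ p.1 - g ^+ p.2).
have gneq : forall a b : nat, a != b -> g ^+ a - g ^+ b != 0.
  by move=> a b ab; rewrite subr_eq0 (inj_eq (ieexprIn g0 g1)).
have Np0 : Np != 0 by apply/prodf_neq0 => p Hp; rewrite numq_eq0 gneq.
exists (E0 * `|Np|)%N; split.
  rewrite muln_gt0 absz_gt0 Np0 andbT muln_gt0 D0 absz_gt0 numq_eq0.
  exact: lt0r_neq0.
move=> s Fs.
pose A : set R := fun t => F t != 0 /\ crel E0 g t s.
have [s0 [Fs0 Hs0s] Hmin] : exists2 a, A a & forall b, A b -> a <= b.
  apply: Hh; first by move=> t [Ft _].
  by exists s; split => //; exact: crel_refl.
have [p1 [p2 [ne [e1 [e2 Hs0]]]]] := @class_key R K F g B D n c s0 g0 g1 B0 D0 Heq Hc Fs0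
  (fun t Ft Ht => Hmin t (conj Ft (crel_trans g0 Ht Hs0s))).
pose r0 : rat := ((e2%:Z - e1%:Z)%:~R / (D%:R * B)) * (g ^+ p1 - g ^+ p2)^-1.
have Dn : (D%:R : rat) != 0 by rewrite pnatr_eq0 -lt0n.
have dn : g ^+ p1 - g ^+ p2 != 0 by apply: gneq.
have Bdn : B * g ^+ p1 - B * g ^+ p2 != 0 by rewrite -mulrBr mulf_neq0 // lt0r_neq0.
have s0E : s0 = ratr r0.
  have Q : r0 = (e2%:R - e1%:R) / D%:R / (B * g ^+ p1 - B * g ^+ p2).
    by rewrite /r0 intrB; field; rewrite Bdn Dn dn lt0r_neq0.
  have Rd : (ratr (B * g ^+ p1) - ratr (B * g ^+ p2) : R) != 0.
    by rewrite -rmorphB fmorph_eq0.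
  by rewrite Q !fmorph_div !rmorphB !rmorph_nat -Hs0 mulfK.
have Yr0 : YE (E0 * `|Np|)%N g r0.
  apply: YE_int; rewrite natrM /r0 mulrACA; apply: rpredM; first exact: base_int.
  apply: absz_int; rewrite /Np (bigD1 (p1, p2)) //= rmorphM /= mulrAC.
  apply: rpredM; first exact: (numq_div_int dn).
  exact: Rint_int.
have [z [y [Hy Hsy]]] := crel_sym g0 Hs0s.
exists (g ^ z * r0 + y); split.
  by rewrite Hsy s0E -rmorphM -rmorphD.
apply: YE_add; first exact: YE_mulz.
by apply: YE_dvd Hy; apply: dvdn_mulr.
Qed.

End ClassLemma2.

Section GammaEq.
Variables (R : realType) (K : fieldType).

Lemma rat_lattice (al be : rat) (A B : nat) a b : 0 < al -> 0 < be ->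
  (a <= A)%N -> (b <= B)%N ->
  al ^+ a * be ^+ b =
  ((`|numq al| ^ a * `|denq al| ^ (A - a) * (`|numq be| ^ b * `|denq be| ^ (B - b)))%N)%:R
  / ((`|denq al| ^ A * `|denq be| ^ B)%N)%:R.
Proof.
move=> al0 be0 aA bB.
have dal : ((`|denq al|)%N%:R : rat) != 0 by rewrite absden intr_eq0 denq_neq0.
have dbe : ((`|denq be|)%N%:R : rat) != 0 by rewrite absden intr_eq0 denq_neq0.
have [x ->] : exists x, A = (x + a)%N by exists (A - a)%N; rewrite subnK.
have [y ->] : exists y, B = (y + b)%N by exists (B - b)%N; rewrite subnK.
rewrite !addnK !natrM !natrX !exprD.
have alE : al = (`|numq al|%N)%:R / (`|denq al|%N)%:R.
  by rewrite absnum // absden divq_num_den.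
have beE : be = (`|numq be|%N)%:R / (`|denq be|%N)%:R.
  by rewrite absnum // absden divq_num_den.
move: dal dbe alE beE.
set p := (`|numq al|%N)%:R : rat; set q := (`|denq al|%N)%:R : rat.
set u := (`|numq be|%N)%:R : rat; set v := (`|denq be|%N)%:R : rat.
move=> dal dbe -> ->.
rewrite !expr_div_n; field.
by rewrite !expf_neq0.
Qed.

End GammaEq.

Section GammaEq2.
Variables (R : realType) (K : fieldType).

Lemma gamma_bound (F : R -> K) (alpha beta : rat) (P Q : nat -> {poly K}) d1 d2
    (np nn mp mn : nat) :
  0 < alpha -> 0 < beta -> is_hahn F -> P d1 != 0 -> Q d2 != 0 ->
  mahler_eq P d1 (ratr alpha : R) F -> mahler_eq Q d2 (ratr beta : R) F ->
  alpha ^+ np * beta ^+ mp / (alpha ^+ nn * beta ^+ mn) != 1 ->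
  exists E : nat, (0 < E)%N /\ forall s, F s != 0 -> exists r : rat,
    s = ratr r /\ YE E (alpha ^+ np * beta ^+ mp / (alpha ^+ nn * beta ^+ mn)) r.
Proof.
move=> a0 b0 Hh HP HQ EP EQ g1.
set g := alpha ^+ np * beta ^+ mp / (alpha ^+ nn * beta ^+ mn) in g1 *.
have g0 : 0 < g by rewrite /g divr_gt0 // mulr_gt0 // exprn_gt0.
set r := #|{: 'I_d1 * 'I_d2}|.
pose ak (k : nat) := (np * k + nn * (r - k))%N.
pose bk (k : nat) := (mp * k + mn * (r - k))%N.
set A := ((np + nn) * r + d1)%N.
set B' := ((mp + mn) * r + d2)%N.
set Dn := (`|denq alpha| ^ A * `|denq beta| ^ B')%N.
have D0 : (0 < Dn)%N by rewrite muln_gt0 !expn_gt0 !absz_gt0 !denq_neq0.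
set h : R := Dn%:R^-1.
have Hlat : forall a b, (a <= A)%N -> (b <= B')%N ->
    exists N : nat, (ratr alpha : R) ^+ a * (ratr beta) ^+ b = N%:R * h.
  move=> a b aA bB; eexists.
  rewrite -!rmorphXn -rmorphM (rat_lattice a0 b0 aA bB) fmorph_div !rmorph_nat.
  reflexivity.
have al0 : (0 : R) < ratr alpha by rewrite ltr0q.
have be0 : (0 : R) < ratr beta by rewrite ltr0q.
have Hred := @reduce R K h P Q d1 d2 (ratr alpha) (ratr beta) F A B'
  al0 be0 HP HQ EP EQ Hlat.
have akA : forall k : 'I_r.+1, (ak k <= A)%N.
  move=> k; have kr : (k <= r)%N by rewrite -ltnS.
  apply: leq_trans (leq_addr d1 _); rewrite mulnDl.
  by apply: leq_add; apply: leq_mul => //; apply: leq_subr.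
have bkB : forall k : 'I_r.+1, (bk k <= B')%N.
  move=> k; have kr : (k <= r)%N by rewrite -ltnS.
  apply: leq_trans (leq_addr d2 _); rewrite mulnDl.
  by apply: leq_add; apply: leq_mul => //; apply: leq_subr.
have [c [Hc Hsum]] := @inspan_dep R K h _ _ r.+1
  (fun k : 'I_r.+1 => V (ratr alpha) (ratr beta) F (ak k) (bk k)) (ltnSn r)
  (fun k => Hred _ _ (akA k) (bkB k)).
pose Bc := alpha ^+ (nn * r) * beta ^+ (mn * r).
have Bc0 : 0 < Bc by rewrite mulr_gt0 // exprn_gt0.
have Qid : forall k : nat, (k <= r)%N -> alpha ^+ (ak k) * beta ^+ (bk k) = Bc * g ^+ k.
  move=> k kr; clearbody r.
  have [t rE] : exists t, r = (k + t)%N by exists (r - k)%N; rewrite subnKC.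
  rewrite /ak /bk /Bc /g rE addKn !mulnDr !exprD !exprM.
  rewrite expr_div_n !exprMn.
  field; rewrite !expf_neq0 // lt0r_neq0 //.
have Vid : forall (k : 'I_r.+1) x,
    V (ratr alpha) (ratr beta) F (ak k) (bk k) x = F (x / ratr (Bc * g ^+ k)).
  move=> k x; have kr : (k <= r)%N by rewrite -ltnS.
  by rewrite /V -(Qid _ kr) rmorphM !rmorphXn.
apply: (@class_lemma R K F g Bc Dn r.+1 c Hh g0 g1 Bc0 D0 Hc) => j.
rewrite -[RHS](Hsum j); apply: eq_bigr => k _; apply: hp_ext => x.
by rewrite Vid.
Qed.

End GammaEq2.

Section Primes.

Lemma no_p_div (g : rat) (a b p : nat) : prime p -> (0 < a)%N -> (0 < b)%N ->
  g = a%:R / b%:R -> logn p a = logn p b -> ~~ (p %| hof g)%N.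
Proof.
move=> pp a0 b0 gE lab.
have g0 : 0 < g by rewrite gE divr_gt0 // ltr0n.
have Hnd : (`|numq g| * b = a * `|denq g|)%N.
  apply/eqP; rewrite -(eqr_nat rat) !natrM absnum // absden.
  have bn : (b%:R : rat) != 0 by rewrite pnatr_eq0 -lt0n.
  have dn : ((denq g)%:~R : rat) != 0 by rewrite intr_eq0 denq_neq0.
  rewrite numqE gE; apply/eqP; field.
  by rewrite bn.
have nn0 : (0 < `|numq g|)%N by rewrite absz_gt0 numq_eq0 lt0r_neq0.
have dd0 : (0 < `|denq g|)%N by rewrite absz_gt0 denq_neq0.
have := congr1 (logn p) Hnd; rewrite !lognM // lab => /eqP.
rewrite addnC eqn_add2l => /eqP Hl.
rewrite /hof Euclid_dvdM // negb_or.
have cp := coprime_num_den g.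
case: (boolP (p %| `|numq g|)%N) => Hn /=.
  have : (0 < logn p `|numq g|)%N by rewrite logn_gt0 mem_primes pp nn0 Hn.
  rewrite Hl logn_gt0 mem_primes pp dd0 /= => Hd.
  have := coprime_dvdl Hn cp; rewrite (coprime_sym p) => /(coprime_dvdl Hd).
  by rewrite /coprime gcdnn => /eqP p1; move: (prime_gt1 pp); rewrite p1.
case: (boolP (p %| `|denq g|)%N) => Hd //=.
have : (0 < logn p `|denq g|)%N by rewrite logn_gt0 mem_primes pp dd0 Hd.
by rewrite -Hl logn_gt0 mem_primes pp nn0 (negbTE Hn).
Qed.

End Primes.

Section Primes2.

Lemma alpha_frac (al : rat) : 0 < al ->
  al = (`|numq al|%N)%:R / (`|denq al|%N)%:R.
Proof. by move=> a0; rewrite absnum // absden divq_num_den. Qed.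

Lemma good_gamma (alpha beta : rat) (p : nat) : 0 < alpha -> 0 < beta ->
  p \in primes (hof alpha) ->
  exists np nn mp mn : nat,
    ~~ (p %| hof (alpha ^+ np * beta ^+ mp / (alpha ^+ nn * beta ^+ mn)))%N /\ (mp != mn).
Proof.
move=> a0 b0 Hp.
have pp : prime p by move: Hp; rewrite mem_primes => /andP [].
set A1 := `|numq alpha|%N; set A2 := `|denq alpha|%N.
set B1 := `|numq beta|%N; set B2 := `|denq beta|%N.
have A10 : (0 < A1)%N by rewrite absz_gt0 numq_eq0 lt0r_neq0.
have A20 : (0 < A2)%N by rewrite absz_gt0 denq_neq0.
have B10 : (0 < B1)%N by rewrite absz_gt0 numq_eq0 lt0r_neq0.
have B20 : (0 < B2)%N by rewrite absz_gt0 denq_neq0.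
set x1 := logn p A1; set x2 := logn p A2; set y1 := logn p B1; set y2 := logn p B2.
exists y1, y2, x2, x1; split.
  apply: (@no_p_div _ (A1 ^ y1 * B1 ^ x2 * A2 ^ y2 * B2 ^ x1)
                      (A2 ^ y1 * B2 ^ x2 * A1 ^ y2 * B1 ^ x1) p pp).
  - by rewrite !muln_gt0 !expn_gt0 A10 A20 B10 B20.
  - by rewrite !muln_gt0 !expn_gt0 A10 A20 B10 B20.
  - rewrite {1 2}(alpha_frac a0) {1 2}(alpha_frac b0) -/A1 -/A2 -/B1 -/B2.
    rewrite !natrM !natrX !expr_div_n.
    have A1n : (A1%:R : rat) != 0 by rewrite pnatr_eq0 -lt0n.
    have A2n : (A2%:R : rat) != 0 by rewrite pnatr_eq0 -lt0n.
    have B1n : (B1%:R : rat) != 0 by rewrite pnatr_eq0 -lt0n.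
    have B2n : (B2%:R : rat) != 0 by rewrite pnatr_eq0 -lt0n.
    by field; rewrite !expf_neq0.
  - rewrite !lognM ?muln_gt0 ?expn_gt0 ?A10 ?A20 ?B10 ?B20 // !lognX -/x1 -/x2 -/y1 -/y2.
    ring.
have hA : (p %| A1 * A2)%N by move: Hp; rewrite mem_primes => /and3P [].
have cp : coprime A1 A2 := coprime_num_den alpha.
have l0 : forall n, (0 < n)%N -> ~~ (p %| n)%N -> logn p n = 0%N.
  move=> n n0 Hn; apply/eqP; rewrite -leqn0 leqNgt logn_gt0 mem_primes.
  by rewrite (negbTE Hn) !andbF.
have l1 : forall n, (0 < n)%N -> (p %| n)%N -> (0 < logn p n)%N.
  by move=> n n0 Hn; rewrite logn_gt0 mem_primes pp n0 Hn.
have pn2 : forall a b, coprime a b -> (p %| a)%N -> ~~ (p %| b)%N.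
  move=> a b cab pa; apply/negP => pb.
  have := coprime_dvdl pa cab; rewrite (coprime_sym p) => /(coprime_dvdl pb).
  by rewrite /coprime gcdnn => /eqP p1; move: (prime_gt1 pp); rewrite p1.
move: hA; rewrite Euclid_dvdM // => /orP [H|H].
  rewrite /x1 /x2 (l0 A2 A20 (pn2 _ _ cp H)).
  by rewrite eq_sym -lt0n l1.
rewrite /x1 /x2 (l0 A1 A10 (pn2 _ _ _ H)); last by rewrite coprime_sym.
by rewrite -lt0n l1.
Qed.

End Primes2.

Section Indep.
Variable R : realType.

Lemma gamma_ne1 (al be : rat) (n1 n2 m1 m2 : nat) : 0 < al -> 0 < be ->
  mult_indep (ratr al : R) (ratr be) -> (n1 != n2) || (m1 != m2) ->
  al ^+ n1 * be ^+ m1 / (al ^+ n2 * be ^+ m2) != 1.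
Proof.
move=> a0 b0 Hind Hne; apply/eqP => E.
have d0 : al ^+ n2 * be ^+ m2 != 0 by rewrite mulf_neq0 // expf_neq0 // lt0r_neq0.
have E1 : al ^+ n1 * be ^+ m1 = al ^+ n2 * be ^+ m2.
  by have := congr1 (fun x => x * (al ^+ n2 * be ^+ m2)) E; rewrite mul1r divfK.
set a : R := ratr al; set b : R := ratr be.
have ap : 0 < a by rewrite ltr0q.
have bp : 0 < b by rewrite ltr0q.
have E2 : a ^+ n1 * b ^+ m1 = a ^+ n2 * b ^+ m2.
  by rewrite /a /b -!rmorphXn -!rmorphM E1.
have E3 : ln a *+ n1 + ln b *+ m1 = ln a *+ n2 + ln b *+ m2.
  have := congr1 (@ln R) E2.
  clearbody a b.
  by rewrite !lnM ?posrE ?exprn_gt0 // !lnXn.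
apply: Hind.
case: (eqVneq (ln b) 0) => [lb0|lb0].
  by exists 0; rewrite lb0 invr0 mulr0 rmorph0.
case: (eqVneq n1 n2) => [en|en].
  exfalso; move: Hne; rewrite en eqxx /= => /eqP; apply.
  by move: E3; rewrite en => /addrI /(mulrIn lb0).
exists ((m2%:Z - m1%:Z)%:~R / (n1%:Z - n2%:Z)%:~R).
have nn : ((n1%:Z - n2%:Z)%:~R : R) != 0.
  by rewrite intr_eq0 subr_eq0 eqz_nat.
rewrite fmorph_div !rmorph_int.
apply/eqP; rewrite eqr_div // ?lb0 //.
move: E3; rewrite -[_ *+ n1]mulr_natr -[_ *+ n2]mulr_natr -[_ *+ m1]mulr_natr.
rewrite -[_ *+ m2]mulr_natr => E3.
rewrite -subr_eq0 !intrB.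
have -> : ln (ratr al : R) * ((n1 : int)%:~R - (n2 : int)%:~R) - ((m2 : int)%:~R - (m1 : int)%:~R) * ln (ratr be) =
  (ln (ratr al) * n1%:R + ln (ratr be) * m1%:R) - (ln (ratr al) * n2%:R + ln (ratr be) * m2%:R).
  rewrite -!pmulrn; ring.
by rewrite E3 subrr eqxx.
Qed.

End Indep.

Lemma den_dvd (X : rat) (M : nat) : M%:R * X \is a Num.int -> (`|denq X| %| M)%N.
Proof.
move=> HI.
have Ey : ((numq (M%:R * X))%:~R : rat) = M%:R * X by rewrite numqK.
have Ez : (numq (M%:R * X) * denq X = M%:Z * numq X)%R.
  apply: (@intr_inj rat); rewrite !intrM Ey numqE.
  by rewrite -mulrA.
have : (`|denq X| %| `|numq X| * M)%N.
  rewrite mulnC -(abszM M%:Z) -Ez abszM; exact: dvdn_mull.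
by rewrite Gauss_dvdr // coprime_sym coprime_num_den.
Qed.

Unset Implicit Arguments.

Theorem mainTheorem13 (R : realType) (K : fieldExtType rat)
  (alpha beta : rat) (N : nat) (F : R -> K)
  (d1 d2 : nat) (P Q : nat -> {poly K}) :
  0 < alpha -> 0 < beta -> mult_indep (ratr alpha : R) (ratr beta) ->
  is_hahn F ->
  P d1 != 0 -> mahler_eq P d1 (ratr alpha : R) F ->
  Q d2 != 0 -> mahler_eq Q d2 (ratr beta : R) F ->
  exists l : nat, (0 < l)%N /\
    forall j : R, hahn_subst F (l%:R) j != 0 ->
      exists q : rat, j = ratr q /\
        forall n m : int, (`|n| <= N)%N -> (`|m| <= N)%N ->
          in_Zlaurent (alpha ^ n * beta ^ m) q.
Proof.
move=> a0 b0 Hind Hh HP EP HQ EQ.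
have g0ne := @gamma_ne1 R alpha beta 1 0 0 0 a0 b0 Hind isT.
have [E0 [E00 HE0]] := @gamma_bound R K F alpha beta P Q d1 d2 1 0 0 0 a0 b0 Hh HP HQ EP EQ g0ne.
have g0E : alpha ^+ 1 * beta ^+ 0 / (alpha ^+ 0 * beta ^+ 0) = alpha.
  by rewrite expr1 !expr0 mulr1 mul1r divr1.
rewrite g0E in HE0.
have Hp : forall p : nat, exists E : nat, (0 < E)%N /\
    (p \in primes (hof alpha) -> exists g : rat, ~~ (p %| hof g)%N /\
       forall s, F s != 0 -> exists r, s = ratr r /\ YE E g r).
  move=> p; case: (boolP (p \in primes (hof alpha))) => Hpp; last by exists 1%N.
  have [np [nn [mp [mn [Hnd Hmm]]]]] := good_gamma a0 b0 Hpp.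
  have gne := @gamma_ne1 R alpha beta np nn mp mn a0 b0 Hind (introT orP (or_intror Hmm)).
  have [E [E0' HE]] := @gamma_bound R K F alpha beta P Q d1 d2 np nn mp mn a0 b0 Hh HP HQ EP EQ gne.
  by exists E; split => // _; eexists; split; [exact: Hnd | exact: HE].
have [Ef HEf] := choice Hp.
pose l := (E0 * \prod_(p <- primes (hof alpha)) Ef p)%N.
have l0 : (0 < l)%N.
  by rewrite /l muln_gt0 E00 /=; apply: prodn_gt0 => i; case: (HEf i).
exists l; split => // j Fj.
set s := j / l%:R.
have [r [sE Yr]] := HE0 s Fj.
pose X := l%:R * r.
have denX : forall g : rat, ~~ (pdiv `|denq X| %| hof g)%N ->
    (forall s, F s != 0 -> exists r, s = ratr r /\ YE l g r) -> `|denq X|%N = 1%N.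
  move=> g Hnd Hg.
  have [r' [sE' [e He]]] := Hg s Fj.
  have rr0 : (ratr r' : R) = ratr r by rewrite -sE -sE'.
  have rr : r' = r by move: rr0; apply: (@fmorph_inj _ _ (@ratr R)).
  have Hd : (`|denq X| %| hof g ^ e)%N.
    apply: den_dvd; move: He; rewrite rr natrM (mulrC (l%:R)) -mulrA.
    by rewrite natrX.
  apply/eqP; apply: contraR Hnd => Hn1.
  have d1' : (1 < `|denq X|)%N.
    by rewrite ltn_neqAle eq_sym Hn1 absz_gt0 denq_neq0.
  have pd := dvdn_trans (pdiv_dvd _) Hd.
  by move: pd; rewrite Euclid_dvdX ?pdiv_prime // => /andP [].
have E0l : (E0 %| l)%N by rewrite /l dvdn_mulr.
have dX1 : `|denq X|%N = 1%N.
  case: (eqVneq `|denq X|%N 1%N) => // Hn1.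
  have [e He] := YE_dvd E0l Yr.
  have Hd : (`|denq X| %| hof alpha ^ e)%N.
    apply: den_dvd; move: He; rewrite natrM (mulrC (l%:R)) -mulrA.
    by rewrite natrX.
  have d1' : (1 < `|denq X|)%N.
    by rewrite ltn_neqAle eq_sym Hn1 absz_gt0 denq_neq0.
  set q := pdiv `|denq X|.
  have qp : prime q := pdiv_prime d1'.
  have qa : (q %| hof alpha)%N.
    by move: (dvdn_trans (pdiv_dvd _) Hd); rewrite Euclid_dvdX // => /andP [].
  have ha0 : (0 < hof alpha)%N.
    by rewrite /hof muln_gt0 !absz_gt0 denq_neq0 numq_eq0 lt0r_neq0.
  have qmem : q \in primes (hof alpha) by rewrite mem_primes qp ha0 qa.
  have [_ Hq] := HEf q.
  have [g [Hnd Hg]] := Hq qmem.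
  apply: (denX g Hnd) => s' Fs'.
  have [r' [sE' Yr']] := Hg s' Fs'.
  exists r'; split => //; apply: YE_dvd Yr'.
  rewrite /l (big_rem q) //=; apply: dvdn_mull; exact: dvdn_mulr.
have dq1 : denq X = 1.
  by rewrite -absz_denq dX1.
exists X; split.
  have -> : (ratr X : R) = l%:R * ratr r by rewrite /X rmorphM rmorph_nat.
  rewrite -sE /s mulrC divfK //.
  by rewrite pnatr_eq0 -lt0n.
move=> n m _ _; exists [:: (numq X, 0)].
by rewrite big_cons big_nil /= expr0z mulr1 addr0 numqE dq1 mulr1.
Qed.
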